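(* Let $R$ be a ring with identity and $a,b,c\in R$. The following are equivalent: (i) $a$ is left $(b,c)$-invertible; (ii) $a^\circ\cap bR=\{0\}$, $abR\cap c^\circ=\{0\}$ and $R=Rca+{}^\circ b$; (iii) $a^\circ\cap bR=\{0\}$ and $R=Rca+{}^\circ b$; (iv) $abR\cap c^\circ=\{0\}$ and $R=Rca+{}^\circ b$; (v) $R=Rca+{}^\circ b$.
   Context: For $x\in R$: $xR=\{xr:r\in R\}$, $Rx=\{rx:r\in R\}$, $x^\circ=\{r: xr=0\}$, ${}^\circ x=\{r: rx=0\}$. The element $a$ is left $(b,c)$-invertible if there is $y\in R$ with $Ry\subseteq Rc$ and $yab=b$. *)

(* Defs.v *)
From mathcomp Require Import all_boot all_algebra.
Set Implicit Arguments. Unset Strict Implicit. Unset Printing Implicit Defensive.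
Import GRing.Theory.
Local Open Scope ring_scope.

(* R is a (possibly trivial) ring with identity: pzRingType. *)

Definition left_ideal_sub (R : pzRingType) (x y : R) : Prop :=
  forall r : R, exists s : R, r * x = s * y.

Definition left_bc_invertible (R : pzRingType) (a b c : R) : Prop :=
  exists y : R, left_ideal_sub y c /\ y * a * b = b.

Definition rann_cap_bR_trivial (R : pzRingType) (a b : R) : Prop :=
  forall x : R, a * x = 0 -> (exists r : R, x = b * r) -> x = 0.

Definition abR_cap_rann_trivial (R : pzRingType) (a b c : R) : Prop :=
  forall x : R, (exists r : R, x = a * b * r) -> c * x = 0 -> x = 0.

Definition R_eq_Rca_add_lann (R : pzRingType) (a b c : R) : Prop :=
  forall x : R, exists r z : R, z * b = 0 /\ x = r * (c * a) + z.

(* Main.v *)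
Require Import Defs.
From mathcomp Require Import all_boot all_algebra.
Set Implicit Arguments.
Import GRing.Theory.
Local Open Scope ring_scope.

Lemma one_dec (R : pzRingType) (a b c : R) :
  R_eq_Rca_add_lann a b c -> exists r z : R, z * b = 0 /\ 1 = r * (c * a) + z.
Proof. by move=> H; apply: H. Qed.

Lemma v_i (R : pzRingType) (a b c : R) :
  R_eq_Rca_add_lann a b c -> left_bc_invertible a b c.
Proof.
move=> /one_dec [r [z [zb e]]]; exists (r * c); split.
  by move=> t; exists (t * r); rewrite mulrA.
have -> : r * c * a = 1 - z by rewrite e -mulrA addrK.
by rewrite mulrBl mul1r zb subr0.
Qed.

Lemma i_v (R : pzRingType) (a b c : R) :
  left_bc_invertible a b c -> R_eq_Rca_add_lann a b c.
Proof.
move=> [y [Hy Hb]] x; have [s Hs] := Hy 1; rewrite mul1r in Hs; subst y.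
exists (x * s), (x - x * (s * (c * a))); split.
  have Hb' : s * (c * a) * b = b by rewrite !mulrA.
  by rewrite mulrBl -(mulrA x) Hb' subrr.
by rewrite -mulrA addrC subrK.
Qed.

Lemma v_ii1 (R : pzRingType) (a b c : R) :
  R_eq_Rca_add_lann a b c -> rann_cap_bR_trivial a b.
Proof.
move=> /one_dec [r [z [zb e]]] x ax [t Ex]; subst x.
rewrite -[b * t]mul1r e mulrDl (mulrA z) zb mul0r addr0 -!mulrA ax.
by rewrite !mulr0.
Qed.

Lemma v_ii2 (R : pzRingType) (a b c : R) :
  R_eq_Rca_add_lann a b c -> abR_cap_rann_trivial a b c.
Proof.
move=> /one_dec [r [z [zb e]]] x [t ->] cx.
have bt : b * t = 0.
  rewrite -[b * t]mul1r e mulrDl (mulrA z) zb mul0r addr0 -!mulrA.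
  by rewrite -!mulrA in cx; rewrite cx !mulr0.
by rewrite -mulrA bt mulr0.
Qed.

Theorem theorem2p13 (R : pzRingType) (a b c : R) :
  let i   := left_bc_invertible a b c in
  let ii  := [/\ rann_cap_bR_trivial a b, abR_cap_rann_trivial a b c
                 & R_eq_Rca_add_lann a b c] in
  let iii := rann_cap_bR_trivial a b /\ R_eq_Rca_add_lann a b c in
  let iv  := abR_cap_rann_trivial a b c /\ R_eq_Rca_add_lann a b c in
  let v   := R_eq_Rca_add_lann a b c in
  [/\ (i <-> ii), (ii <-> iii), (iii <-> iv) & (iv <-> v)].
Proof.
move=> i ii iii iv v; rewrite /i /ii /iii /iv /v.
split; split.
- move=> H; have Hv := i_v H; split=> //; [exact: v_ii1 | exact: v_ii2].
- by case=> _ _ /v_i.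
- by case.
- by case=> H1 H2; split=> //; exact: v_ii2.
- by case=> _ H; split=> //; exact: v_ii2.
- by case=> _ H; split=> //; exact: v_ii1.
- by case.
- by move=> H; split=> //; exact: v_ii2.
Qed.
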